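(* Let $p$ be a prime and $n\ge1$. Suppose $V_m\to V$ in $\mathcal{Z}$. Then there is $m_0$ such that $V\subset V_m$ for all $m\ge m_0$.
   Context: $\mathcal{L}_{n,p}=\left(\bigoplus_{\mathbb{Z}}(\mathbb{Z}/p\mathbb{Z})^n\right)\rtimes\mathbb{Z}$ and $\mathcal{A}_{n,p}=\bigoplus_{\mathbb{Z}}(\mathbb{Z}/p\mathbb{Z})^n$. ${\rm Sub}(G)$ is the space of subgroups of $G$ with the topology induced from $\{0,1\}^G$, and $\mathcal{Z}={\rm Sub}(\mathcal{L}_{n,p})\setminus{\rm Sub}(\mathcal{A}_{n,p})$, the subgroups of $\mathcal{L}_{n,p}$ not contained in $\mathcal{A}_{n,p}$. *)

(* Defs.v *)
From mathcomp Require Import all_boot all_algebra.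
Set Implicit Arguments. Unset Strict Implicit. Unset Printing Implicit Defensive.
Import GRing.Theory.
Local Open Scope ring_scope.

(* Raw elements of L_{n,p} = (⊕_Z (Z/pZ)^n) ⋊ Z : a pair (a, k) where
   a : Z -> (F_p)^n (row vectors) and k : Z.  Genuine elements of L_{n,p}
   are those with a finitely supported. *)
Definition Lelt (p n : nat) : Type := ((int -> 'rV['F_p]_n) * int)%type.

Definition finsupp (p n : nat) (a : int -> 'rV['F_p]_n) : Prop :=
  exists N : nat, forall i : int, (N < absz i)%N -> a i = 0.

Definition inL (p n : nat) (x : Lelt p n) : Prop := finsupp x.1.

(* The generator of Z acts by the shift (t.a)(i) = a(i-1):
   (a,k)(b,l) = (a + t^k b, k + l). *)
Definition Lmul (p n : nat) (x y : Lelt p n) : Lelt p n :=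
  (fun i => x.1 i + y.1 (i - x.2), x.2 + y.2).
Definition Lone (p n : nat) : Lelt p n := (fun _ => 0, 0).
Definition Linv (p n : nat) (x : Lelt p n) : Lelt p n :=
  (fun i => - x.1 (i + x.2), - x.2).

Definition is_subgroup (p n : nat) (H : Lelt p n -> Prop) : Prop :=
  [/\ (forall x, H x -> inL x),
      H (Lone p n),
      (forall x y, H x -> H y -> H (Lmul x y)) &
      (forall x, H x -> H (Linv x))].

Definition inA (p n : nat) (x : Lelt p n) : Prop := x.2 = 0.

Definition inZ (p n : nat) (H : Lelt p n -> Prop) : Prop :=
  is_subgroup H /\ ~ (forall x, H x -> inA x).

(* Convergence in Sub(L) with the topology induced from the product
   topology on {0,1}^L: for every g in L, eventually (g ∈ V_m <-> g ∈ V). *)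
Definition sub_converges (p n : nat) (Vs : nat -> Lelt p n -> Prop)
    (V : Lelt p n -> Prop) : Prop :=
  forall x : Lelt p n, inL x ->
    exists m0 : nat, forall m : nat, (m0 <= m)%N -> (Vs m x <-> V x).

(* Main.v *)
Require Import Defs.
From mathcomp Require Import all_boot all_algebra.
From mathcomp Require Import zify ring.
From Stdlib Require Import Classical ClassicalEpsilon FunctionalExtensionality.
Set Implicit Arguments. Unset Strict Implicit. Unset Printing Implicit Defensive.
Import GRing.Theory Num.Theory.
Local Open Scope ring_scope.

Lemma eventually_fin (T : finType) (P : T -> nat -> Prop) :
  (forall t, exists m0, forall m, (m0 <= m)%N -> P t m) ->
  exists M, forall t m, (M <= m)%N -> P t m.
Proof.
move=> h.
suff: forall s : seq T, exists M, forall t m, t \in s -> (M <= m)%N -> P t m.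
  case/(_ (enum T)) => M hM; exists M => t m; apply: (hM); by rewrite mem_enum.
elim=> [|t s [M hM]]; first by exists 0%N.
have [m0 hm0] := h t.
exists (maxn m0 M) => t' m; rewrite inE => /orP[/eqP->|ts] le.
  apply: hm0; exact: leq_trans (leq_maxl _ _) le.
apply: (hM) => //; exact: leq_trans (leq_maxr _ _) le.
Qed.

Section S.
Variables (p n : nat).
Local Notation R := ('rV['F_p]_n).
Local Notation E := (Lelt p n).
Implicit Types (H : E -> Prop) (w u : int -> R).

Definition shf (z : int) w : int -> R := fun i => w (i - z).
Definition supp_in w (a b : int) := forall i, (i < a \/ b < i) -> w i = 0.

Lemma pair_eq (x y : E) : (forall i, x.1 i = y.1 i) -> x.2 = y.2 -> x = y.
Proof. case: x y => [x1 x2] [y1 y2] /= h ->; by rewrite (functional_extensionality _ _ h). Qed.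

Lemma conj_shift H (g : E) w : is_subgroup H -> H g -> H (w, 0) ->
  H (shf g.2 w, 0) /\ H (shf (- g.2) w, 0).
Proof.
case => _ _ hM hI hg hw; split.
- have -> : (shf g.2 w, 0) = Lmul (Lmul g (w,0)) (Linv g).
    apply: pair_eq => [i|] /=; last by rewrite addr0 subrr.
    by rewrite /shf addr0 subrK addrAC subrr add0r.
  by apply: (hM); [apply: (hM)|apply: (hI)].
- have -> : (shf (- g.2) w, 0) = Lmul (Lmul (Linv g) (w,0)) g.
    apply: pair_eq => [i|] /=; last by rewrite addr0 addNr.
    by rewrite /shf addr0 opprK addrAC addNr add0r.
  by apply: (hM) => //; apply: (hM) => //; apply: (hI).
Qed.

Lemma shf_comp a b w : shf a (shf b w) = shf (a + b) w.
Proof. apply: functional_extensionality => i; rewrite /shf; congr w; ring. Qed.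

Lemma shf0 w : shf 0 w = w.
Proof. apply: functional_extensionality => i; by rewrite /shf subr0. Qed.

Lemma shift_mul H (g : E) w (z : int) : is_subgroup H -> H g -> H (w,0) ->
  H (shf (z * g.2) w, 0).
Proof.
move=> hH hg.
have key : forall m : nat, forall w, H (w,0) ->
    H (shf (m%:Z * g.2) w, 0) /\ H (shf (- (m%:Z * g.2)) w, 0).
  elim=> [|m IH] w' hw'.
    by rewrite mul0r oppr0 shf0.
  have [h1 h2] := IH _ hw'.
  have -> : (m.+1)%:Z * g.2 = g.2 + m%:Z * g.2 by ring.
  rewrite opprD -!shf_comp; split.
    exact: (conj_shift hH hg h1).1.
  exact: (conj_shift hH hg h2).2.
move=> hw; case: z => m.
  exact: (key m w hw).1.
rewrite NegzE mulNr; exact: (key m.+1 w hw).2.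
Qed.

Lemma add_in H w u : is_subgroup H -> H (w,0) -> H (u,0) -> H (fun i => w i + u i, 0).
Proof.
move=> [] _ _ hM hI hw hu.
have -> : ((fun i => w i + u i), 0) = Lmul (w,0) (u,0).
  apply: pair_eq => [i|] /=; by rewrite ?subr0 ?addr0.
exact: hM.
Qed.

Lemma sub_in H w u : is_subgroup H -> H (w,0) -> H (u,0) -> H (fun i => w i - u i, 0).
Proof.
move=> [] _ _ hM hI hw hu.
have -> : ((fun i => w i - u i), 0) = Lmul (w,0) (Linv (u,0)).
  apply: pair_eq => [i|] /=; by rewrite ?subr0 ?addr0 ?oppr0.
by apply: hM => //; apply: hI.
Qed.

Lemma zero_in H w : is_subgroup H -> (forall i, w i = 0) -> H (w,0).
Proof.
move=> [] _ h1 _ _ hw.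
have -> : (w, 0) = Lone p n by apply: pair_eq.
exact: h1.
Qed.

Lemma supp_in_weak w a b a' b' : a' <= a -> b <= b' -> supp_in w a b -> supp_in w a' b'.
Proof. move=> ha hb h i hi; apply: h; lia. Qed.

Variable V : E -> Prop.

Definition Sset (j : int) (c : nat) (v : R) :=
  exists w, V (w,0) /\ supp_in w (j - c%:Z) j /\ w j = v.

Lemma Sset_mono j c c' v : (c <= c')%N -> Sset j c v -> Sset j c' v.
Proof.
move=> le [w [hw [hs he]]]; exists w; split=> //; split=> //.
apply: supp_in_weak hs => //; lia.
Qed.

Lemma Sset_shift (g : E) j c v (z : int) : is_subgroup V -> V g ->
  Sset j c v -> Sset (j + z * g.2) c v.
Proof.
move=> hV hg [w [hw [hs he]]]; exists (shf (z * g.2) w); split.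
  exact: shift_mul.
split.
  move=> i hi; rewrite /shf; apply: hs; lia.
by rewrite /shf addrK.
Qed.

Lemma stab (g : E) (kn : nat) : is_subgroup V -> V g -> g.2 = kn%:Z -> (0 < kn)%N ->
  exists C : nat, forall (r : int) v c, 0 <= r < kn%:Z -> Sset r c v -> Sset r C v.
Proof.
move=> hV hg hk kpos.
pose P := (fun (t : 'I_kn * R) C => forall c, Sset (nat_of_ord t.1)%:Z c t.2 -> Sset (nat_of_ord t.1)%:Z C t.2).
have hev : forall t, exists m0, forall m, (m0 <= m)%N -> P t m.
  move=> [r v]; rewrite /P /=.
  case: (classic (exists c, Sset r c v)) => [[c hc]|hn].
    exists c => m le c' _; exact: Sset_mono le hc.
  exists 0%N => m _ c' hc'; exfalso; apply: hn; by exists c'.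
have [M hM] := eventually_fin hev.
exists M => r v c hr hS.
have rk : (absz r < kn)%N by lia.
move: (hM (Ordinal rk, v) M (leqnn _) c); rewrite /P /=.
have -> : ((absz r)%:Z = r) by lia.
by apply.
Qed.

Lemma Wclaim H (g : E) (kn C : nat) :
  is_subgroup V -> is_subgroup H -> V g -> H g -> g.2 = kn%:Z -> (0 < kn)%N ->
  (forall r v c, 0 <= r < kn%:Z -> Sset r c v -> Sset r C v) ->
  (forall u, V (u,0) -> supp_in u (- C%:Z) kn%:Z -> H (u,0)) ->
  forall N : nat, forall w a b, V (w,0) -> supp_in w a b -> b - a < N%:Z -> H (w,0).
Proof.
move=> hV hH Vg Hg hk kpos hst hF.
elim=> [|N IH] w a b Vw sw hN.
  apply: zero_in => // i; apply: sw; lia.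
case: (boolP (b < a)) => ba.
  apply: zero_in => // i; apply: sw; lia.
set q := (b %/ kn%:Z)%Z; set r := (b %% kn%:Z)%Z.
have bqr : b = q * kn%:Z + r by exact: divz_eq.
have r0 : 0 <= r by apply: modz_ge0; lia.
have rk : r < kn%:Z by apply: ltz_pmod; lia.
set w' := shf ((- q) * g.2) w.
have Vw' : V (w',0) by exact: shift_mul.
have sw' : supp_in w' (a - q * kn%:Z) r.
  move=> i hi; rewrite /w' /shf hk; apply: sw; lia.
suff Hw' : H (w',0).
  have -> : w = shf (q * g.2) w'.
    apply: functional_extensionality => i; rewrite /w' /shf; congr w; ring.
  exact: shift_mul.
case: (boolP (absz (b - a) <= C)%N) => cC.
  apply: hF => //; apply: supp_in_weak sw' => //; lia.
have hS : Sset r (absz (b - a)) (w' r).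
  exists w'; split=> //; split=> //; apply: supp_in_weak sw' => //; lia.
have [u [Vu [su eu]]] := hst r _ _ (introT andP (conj r0 rk)) hS.
have Hu : H (u,0) by apply: hF => //; apply: supp_in_weak su => //; lia.
have Vd : V (fun i => w' i - u i, 0) by exact: sub_in.
have sd : supp_in (fun i => w' i - u i) (a - q * kn%:Z) (r - 1).
  move=> i hi; case: (boolP (i == r)) => [/eqP ->|ir].
    by rewrite eu subrr.
  rewrite sw'; last by lia.
  rewrite su; last by lia.
  by rewrite subrr.
have Hd := IH _ _ _ Vd sd ltac:(lia).
have -> : w' = (fun i => (w' i - u i) + u i).
  by apply: functional_extensionality => i; rewrite subrK.
exact: add_in.
Qed.

Lemma Vclaim H (g : E) (kn C : nat) :
  is_subgroup V -> is_subgroup H -> V g -> H g -> g.2 = kn%:Z -> (0 < kn)%N ->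
  (forall x, V x -> 0 < x.2 -> kn%:Z <= x.2) ->
  (forall r v c, 0 <= r < kn%:Z -> Sset r c v -> Sset r C v) ->
  (forall u, V (u,0) -> supp_in u (- C%:Z) kn%:Z -> H (u,0)) ->
  forall x, V x -> H x.
Proof.
move=> hV hH Vg Hg hk kpos hmin hst hF.
have hV' := hV; have hH' := hH.
move: hV' hH' => [] VL _ VM VI [] _ _ HM HI.
suff: forall N : nat, forall x, V x -> (absz x.2 < N)%N -> H x.
  move=> h x Vx; exact: (h (absz x.2).+1 x Vx (ltnSn _)).
elim=> [|N IH] x Vx hN; first by [].
case: (boolP (x.2 == 0)) => [/eqP x0|xn0].
  have [N0 hN0] := VL x Vx.
  case: x Vx hN x0 hN0 => x1 x2 Vx hN /= x0 hN0; subst x2.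
  apply: (Wclaim hV hH Vg Hg hk kpos hst hF (N := (absz (2 * N0%:Z)).+1) Vx (a := - N0%:Z) (b := N0%:Z)).
    move=> i hi; apply: hN0; lia.
  lia.
case: (boolP (kn%:Z <= x.2)) => h1.
  have Vy : V (Lmul x (Linv g)) by apply: VM => //; apply: VI.
  have Hy : H (Lmul x (Linv g)) by apply: IH => //=; lia.
  have -> : x = Lmul (Lmul x (Linv g)) g.
    apply: pair_eq => [i|] /=; last by rewrite subrK.
    by rewrite opprD opprK addrA subrK.
  exact: HM.
case: (boolP (x.2 <= - kn%:Z)) => h2.
  have Vy : V (Lmul x g) by apply: VM.
  have Hy : H (Lmul x g) by apply: IH => //=; lia.
  have -> : x = Lmul (Lmul x g) (Linv g).
    apply: pair_eq => [i|] /=; last by rewrite addrK.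
    by rewrite opprD addrA subrK addrK.
  by apply: HM => //; apply: HI.
case: (boolP (0 < x.2)) => h3.
  have := hmin x Vx h3; lia.
have := hmin (Linv x) (VI _ Vx) ltac:(rewrite /=; lia); rewrite /=; lia.
Qed.

End S.

Definition asb (P : Prop) : bool := if excluded_middle_informative P then true else false.
Lemma asbP (P : Prop) : asb P <-> P.
Proof. rewrite /asb; case: excluded_middle_informative => //; split=> //. Qed.

Theorem lemma6p13 (p n : nat) (Vs : nat -> Lelt p n -> Prop)
    (V : Lelt p n -> Prop) :
  prime p -> (1 <= n)%N ->
  (forall m, inZ (Vs m)) -> inZ V -> sub_converges Vs V ->
  exists m0 : nat, forall m : nat, (m0 <= m)%N ->
    forall x : Lelt p n, V x -> Vs m x.
Proof.
move=> _ _ hVs [hV notA] hconv.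
have hV' := hV; move: hV' => [] VL _ VM VI.
have [g0 [Vg0 ng0]] : exists g, V g /\ g.2 != 0.
  apply: NNPP => h; apply: notA => x Vx; rewrite /inA.
  case: (classic (x.2 = 0)) => // ne; exfalso; apply: h; exists x; split=> //; exact/eqP.
pose Q l := (0 < l)%N /\ exists x, V x /\ x.2 = l%:Z.
have exQ : exists l, asb (Q l).
  exists (absz g0.2); apply/asbP; split; first lia.
  case: (boolP (0 <= g0.2)) => s.
    exists g0; split=> //; lia.
  exists (Linv g0); split; first exact: VI.
  rewrite /=; lia.
case: (ex_minnP exQ) => kn /asbP [kpos [g [Vg hk]]] kmin.
have hmin : forall x, V x -> 0 < x.2 -> kn%:Z <= x.2.
  move=> x Vx x0.
  have : (kn <= absz x.2)%N.
    apply: kmin; apply/asbP; split; first lia.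
    exists x; split=> //; lia.
  lia.
have [C hst] := stab hV Vg hk kpos.
pose T := {ffun 'I_(C + kn).+1 -> 'rV['F_p]_n}.
pose dec (f : T) : int -> 'rV['F_p]_n := fun i =>
  if (- C%:Z <= i) && (i <= kn%:Z) then f (inord (absz (i + C%:Z))) else 0.
have hev : forall f : T, exists m0, forall m, (m0 <= m)%N ->
    V (dec f, 0) -> Vs m (dec f, 0).
  move=> f.
  have hL : inL (dec f, 0).
    exists (C + kn)%N => i hi; rewrite /dec /=.
    case: ifP => // /andP [h1 h2]; exfalso; lia.
  have [m0 hm0] := hconv _ hL.
  exists m0 => m le; exact: (hm0 m le).2.
have [M hM] := eventually_fin hev.
have [mg hmg] := hconv g (VL g Vg).
exists (maxn M mg) => m le x Vx.
have hM' : (M <= m)%N by exact: leq_trans (leq_maxl _ _) le.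
have hmg' : (mg <= m)%N by exact: leq_trans (leq_maxr _ _) le.
have Hs := (hVs m).1.
apply: (Vclaim hV Hs Vg ((hmg m hmg').2 Vg) hk kpos hmin hst _ Vx).
move=> u Vu su.
have e : u = dec [ffun j : 'I_(C + kn).+1 => u ((nat_of_ord j)%:Z - C%:Z)].
  apply: functional_extensionality => i; rewrite /dec.
  case: ifP => [/andP [h1 h2]|hn].
    rewrite ffunE inordK; last by lia.
    congr u; lia.
  rewrite su //; move/negbT: hn; rewrite negb_and => /orP [] h; [left|right]; lia.
rewrite e in Vu *; exact: hM.
Qed.
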